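(* In Ruleset D, for any superposition of single Nim heaps, $\langle \mathrm{Nim}(i_1),\ldots,\mathrm{Nim}(i_\ell)\rangle_D\equiv *k$ where $k=\max_{1\le j\le\ell} i_j$.
   Context: Single-heap Nim: $\mathrm{Nim}(x)$ is a heap of $x$ tokens; classical move $(1,-j)$, $j\ge1$, removes $j$ tokens and is illegal if fewer than $j$ tokens remain. Quantum variation: a position is a nonempty finite set $\langle G_1,\ldots,G_n\rangle$ of classical positions; a classical move is legal if legal in some $G_i$; a Q-move is a nonempty set of legal classical moves, leading to the superposition of all legal results of applying one of its moves to one of the $G_i$. Ruleset D (subscript $D$): every Q-move, including a single classical move, is allowed. The player with no allowed Q-move loses. $\equiv$ is game equivalence, $*k$ the value of a classical Nim heap of $k$ tokens. *)

(* Defs.v *)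
From mathcomp Require Import all_boot.
Set Implicit Arguments. Unset Strict Implicit. Unset Printing Implicit Defensive.

Record igame := IGame {
  pos : Type;
  move : pos -> pos -> Prop;   (* move p q : q is an option of p *)
  start : pos }.

Inductive Lose (P : Type) (mv : P -> P -> Prop) (p : P) : Prop :=
  | LoseI : (forall q, mv p q -> Win mv q) -> Lose mv p
with Win (P : Type) (mv : P -> P -> Prop) (p : P) : Prop :=
  | WinI : forall q, mv p q -> Lose mv q -> Win mv p.

Definition short (G : igame) : Prop :=
  Acc (fun q p => @move G p q) (start G).

Definition sum_move (G H : igame) (a b : pos G * pos H) : Prop :=
  (@move G a.1 b.1 /\ b.2 = a.2) \/ (b.1 = a.1 /\ @move H a.2 b.2).

Definition gsum (G H : igame) : igame :=
  @IGame (pos G * pos H)%type (@sum_move G H) (start G, start H).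

Definition gequiv (G H : igame) : Prop :=
  forall X : igame, short X ->
    (Lose (@move (gsum G X)) (start (gsum G X)) <->
     Lose (@move (gsum H X)) (start (gsum H X))).

Definition nim (k : nat) : igame := @IGame nat (fun a b => b < a) k.

(* A position is a (nonempty, finite)
   set of heap sizes, represented by a seq nat read as a set (membership).
   A Q-move is a nonempty set J of classical moves (1,-j), each legal in some
   G_i (j >= 1 and j <= i for some i in S); the result is the set of all
   legal results i - j (i in S, j in J, j <= i). *)
Definition qmoveD (S T : seq nat) : Prop :=
  exists J : seq nat,
    J != [::] /\
    (forall j, j \in J -> 0 < j /\ exists2 i, i \in S & j <= i) /\
    (forall x, x \in T <-> exists i j, [/\ i \in S, j \in J, j <= i & x = i - j]).

Definition qnimD (s : seq nat) : igame := @IGame (seq nat) qmoveD s.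

(* Main.v *)
Require Import Defs.
From mathcomp Require Import all_boot.

Scheme Lose_min := Minimality for Lose Sort Prop
with Win_min := Minimality for Win Sort Prop.

Section Bisim.
Variables (G H X : igame) (f : pos G -> pos H).
Hypothesis fwd : forall p p', @move G p p' -> @move H (f p) (f p').
Hypothesis bwd : forall p q', @move H (f p) q' -> exists2 p', @move G p p' & f p' = q'.

Let mG := sum_move (G:=G) (H:=X).
Let mH := sum_move (G:=H) (H:=X).

Lemma bisim1 : forall a, Lose mG a -> Lose mH (f a.1, a.2).
Proof.
move=> a0 L.
apply: (@Lose_min _ mG (fun a => Lose mH (f a.1, a.2)) (fun a => Win mH (f a.1, a.2))
  _ _ a0 L).
- move=> [p x] _ Hq; constructor => -[q' x'] [[/= Hm ->]|[/= -> Hm]].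
  + have [p' Hp' <-] := bwd _ _ Hm.
    have := Hq (p', x); apply; by left.
  + have := Hq (p, x'); apply; by right.
- move=> [p x] [p' x'] Hm _ IH.
  apply: (WinI (q := (f p', x'))) => //.
  case: Hm => [[/= Hm ->]|[/= -> Hm]]; [left|right] => //=; split=> //; exact: fwd _ _ Hm.
Qed.

Lemma bisim2 : forall a, Lose mH a -> forall p, a.1 = f p -> Lose mG (p, a.2).
Proof.
move=> a0 L.
apply: (@Lose_min _ mH (fun a => forall p, a.1 = f p -> Lose mG (p, a.2))
   (fun a => forall p, a.1 = f p -> Win mG (p, a.2)) _ _ a0 L).
- move=> [q x] _ Hq p /= Eq; constructor => -[p' x'] [[/= Hm ->]|[/= -> Hm]].
  + apply: (Hq (f p', x)) => //; left; split=> //=; rewrite Eq; exact: fwd _ _ Hm.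
  + apply: (Hq (q, x')) => //; right; split=> //=.
- move=> [q x] [q' x'] Hm _ IH p /= Eq.
  case: Hm => [[/= Hm Ex]|[/= Eq' Hm]].
  + rewrite Eq in Hm; have [p' Hp' Ep'] := bwd _ _ Hm.
    apply: (WinI (q := (p', x'))); last by apply: IH.
    by left; split.
  + apply: (WinI (q := (p, x'))); last by apply: IH; rewrite /= Eq'.
    by right; split.
Qed.

Lemma bisim a x : Lose mG (a, x) <-> Lose mH (f a, x).
Proof.
split; first by move/bisim1.
by move/bisim2; apply.
Qed.
End Bisim.

Definition qmax (S : seq nat) : nat := \max_(i <- S) i.

Lemma qmax_ub S i : i \in S -> i <= qmax S.
Proof.
rewrite /qmax; elim: S => //= a S IH; rewrite in_cons big_cons.
case/orP=> [/eqP->|/IH h]; first exact: leq_maxl.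
exact: leq_trans h (leq_maxr _ _).
Qed.

Arguments qmax_ub {S i}.

Lemma qmax_lub S m : (forall i, i \in S -> i <= m) -> qmax S <= m.
Proof.
rewrite /qmax; elim: S => [|a S IH] h; first by rewrite big_nil.
rewrite big_cons geq_max h ?mem_head //=; apply: IH => i hi; apply: h.
by rewrite in_cons hi orbT.
Qed.

Lemma qmax_mem S : 0 < qmax S -> qmax S \in S.
Proof.
rewrite /qmax; elim: S => [|a S IH]; first by rewrite big_nil.
rewrite big_cons in_cons => h.
case: (leqP a (\max_(i <- S) i)) => hl.
- move: h; rewrite (maxn_idPr hl) => h; by rewrite IH ?orbT.
- by rewrite eqxx.
Qed.

Lemma qfwd (S T : seq nat) : qmoveD S T -> qmax T < qmax S.
Proof.
move=> [J [J0 [HJ HT]]].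
  case: J J0 HJ HT => // j0 J _ HJ HT.
  have [j0p [i0 i0S j0i]] := HJ j0 (mem_head _ _).
  have pos : 0 < qmax S.
    exact: (leq_trans (leq_trans j0p j0i) (qmax_ub i0S)).
  rewrite -(prednK pos) ltnS.
  apply: qmax_lub => x /HT [i [j [iS jJ ji ->]]].
  have [jp _] := HJ j jJ.
  rewrite -ltnS prednK //; apply: (leq_trans _ (qmax_ub iS)).
  by rewrite ltn_subrL jp /=; apply: leq_trans ji.
Qed.

Lemma qbwd (S : seq nat) (y : nat) : y < qmax S -> exists2 T, qmoveD S T & qmax T = y.
Proof.
move=> hy.
  set m := qmax S in hy *.
  have pos : 0 < m by apply: leq_ltn_trans hy.
  have mS := qmax_mem _ pos.
  exists [seq i - (m - y) | i <- S & m - y <= i].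
  + exists [:: m - y]; split => //; split.
    * move=> j; rewrite in_cons in_nil orbF => /eqP ->; split; first by rewrite subn_gt0.
      by exists m => //; rewrite leq_subr.
    * move=> x; split.
      - case/mapP=> i; rewrite mem_filter => /andP [hi iS] ->.
        by exists i, (m - y); split => //; rewrite mem_head.
      - move=> [i [j [iS]]]; rewrite in_cons in_nil orbF => /eqP -> hj ->.
        by apply: (map_f (fun i => i - (m - y))); rewrite mem_filter hj iS.
  + apply/eqP; rewrite eqn_leq; apply/andP; split.
    * apply: qmax_lub => x /mapP [i]; rewrite mem_filter => /andP [hi iS] ->.
      rewrite leq_subLR subnK ?(ltnW hy) //; exact: qmax_ub.
    * have h : m - (m - y) = y by rewrite subKn // ltnW.
      rewrite -{1}h.
      by apply: qmax_ub; apply: (map_f (fun i => i - (m - y))); rewrite mem_filter leq_subr mS.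
Qed.

Theorem lemma3 (s : seq nat) :
  s != [::] -> gequiv (qnimD s) (nim (\max_(i <- s) i)).
Proof.
move=> _ X _.
have := @bisim (qnimD s) (nim (\max_(i <- s) i)) X qmax _ _ s (start X).
apply.
- move=> S T; exact: qfwd.
- move=> S y; exact: qbwd.
Qed.
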